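(* Let $a>0$, $\epsilon>0$ with $a\epsilon$ small (in particular $a\epsilon<1$). For $x_0^+$, $x_0^-$ let $v_\pm(x,x_0^\pm)$ denote the solution of $$\epsilon\dot v=-a\epsilon v-\sin(\pi\omega_\pm x),\qquad \omega_+=\tfrac32,\ \omega_-=\tfrac12,$$ with $v_\pm(x_0^\pm,x_0^\pm)=\pm1$, and let $\bar P^a_{\epsilon,\pm}(x_0^\pm)$ be the next $x>x_0^\pm$ at which $v_\pm(x,x_0^\pm)=\pm1$. Define, for $n\in\mathbb{N}$, $$x^\pm_{\epsilon,n}=x^\pm_n\pm(-1)^{n+1}\frac{1}{\pi\omega_\pm}\arcsin(a\epsilon),\qquad x_n^+=\tfrac{2n}{3},\ x_n^-=2n.$$ Then for all $n\in\mathbb{N}$, $$\bar P^a_{\epsilon,+}(x^+_{\epsilon,2n+1})\in\left(x^+_{\epsilon,2n+2},x^+_{\epsilon,2n+3}\right),\qquad \bar P^a_{\epsilon,-}(x^-_{\epsilon,2n})\in\left(x^-_{\epsilon,2n+1},x^-_{\epsilon,2n+2}\right).$$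
   Context: The points $x^\pm_{\epsilon,n}$ are the tangency (fold) points of the vector fields $\epsilon\dot v=-a\epsilon v-\sin(\pi\omega_\pm x)$ with the lines $v=\pm1$, i.e. solutions of $-a\epsilon(\pm1)-\sin(\pi\omega_\pm x)=0$ near $x_n^\pm$. These are the dynamics of the regularized system $\epsilon\dot v=-a\epsilon v-\sin(\pi x[1+\frac12\psi(v)])$ in the regions $v\ge1$ and $v\le-1$, where $\psi(v)=\pm1$. *)

(* Defs.v *)
From Stdlib Require Import Reals Lra.
Open Scope R_scope.

Definition omega_p : R := 3 / 2.
Definition omega_m : R := 1 / 2.

Definition xn_p (n : nat) : R := 2 * INR n / 3.
Definition xn_m (n : nat) : R := 2 * INR n.

Definition xe_p (a eps : R) (n : nat) : R :=
  xn_p n + (-1) ^ (n + 1) * asin (a * eps) / (PI * omega_p).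
Definition xe_m (a eps : R) (n : nat) : R :=
  xn_m n - (-1) ^ (n + 1) * asin (a * eps) / (PI * omega_m).

Definition is_sol (a eps om : R) (v : R -> R) : Prop :=
  forall x, exists d, derivable_pt_lim v x d /\
    eps * d = - a * eps * v x - sin (PI * om * x).

Definition next_hit (v : R -> R) (x0 c x1 : R) : Prop :=
  x0 < x1 /\ v x1 = c /\ (forall x, x0 < x < x1 -> v x <> c).

(* Main.v *)
Require Import Defs.
From Stdlib Require Import Reals Lra Lia.
From Coquelicot Require Import Coquelicot.
Open Scope R_scope.
Lemma S1 t u : 0 < t < PI/2 -> t < u < PI - t -> sin t < sin u.
Proof.
intros Ht Hu. pose proof PI_RGT_0.
destruct (Rle_dec u (PI/2)).
- apply sin_increasing_1; lra.
- rewrite <- (sin_PI_x u). apply sin_increasing_1; lra.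
Qed.

Lemma S2 t u : 0 < t < PI/2 -> PI - t < u < 2*PI + t -> sin u < sin t.
Proof.
intros Ht Hu. pose proof PI_RGT_0.
destruct (Rle_dec u (3*(PI/2))).
- rewrite <- (sin_PI_x t). apply sin_decreasing_1; lra.
- replace u with ((u - 2*PI) + 2 * INR 1 * PI) by (simpl; ring).
  rewrite sin_period. apply sin_increasing_1; lra.
Qed.

Lemma mul_gt k c y t : 0 < k -> y + t/k < c -> t < k*(c-y).
Proof.
intros Hk H. replace t with (k*(t/k)) by (field; lra).
apply Rmult_lt_compat_l; lra.
Qed.

Lemma mul_lt k c y t : 0 < k -> c < y + t/k -> k*(c-y) < t.
Proof.
intros Hk H. replace t with (k*(t/k)) by (field; lra).
apply Rmult_lt_compat_l; lra.
Qed.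

Lemma gen (a eps k y : R) (V : R -> R) :
  0 < a -> 0 < eps -> a*eps < 1 -> 0 < k ->
  (forall x, exists d, derivable_pt_lim V x d /\ eps * d = - a * eps * V x + sin (k*(x-y))) ->
  V (y + asin(a*eps)/k) = 1 ->
  exists x1, next_hit V (y + asin (a*eps)/k) 1 x1 /\
    y + (PI - asin(a*eps))/k < x1 < y + (2*PI + asin(a*eps))/k.
Proof.
intros Ha He Hae Hk HV HV0.
pose proof PI_RGT_0 as HPI.
set (th := asin (a*eps)) in *.
assert (Hae0 : 0 < a*eps) by (apply Rmult_lt_0_compat; lra).
assert (Hsin : sin th = a*eps) by (apply sin_asin; lra).
assert (Hb : - (PI/2) < th < PI/2) by (apply asin_bound_lt; lra).
assert (Hth0 : 0 < th).
{ destruct (Rlt_dec 0 th) as [h|h]; [exact h|].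
  destruct (Req_dec th 0) as [e|e].
  - rewrite e, sin_0 in Hsin; lra.
  - assert (sin th < sin 0) by (apply sin_increasing_1; lra). rewrite sin_0 in H; lra. }
assert (Hcos : 0 < cos th) by (apply cos_gt_0; lra).
set (x0 := y + th/k) in *. set (xA := y + (PI - th)/k). set (xB := y + (2*PI + th)/k).
assert (H0A : x0 < xA).
{ unfold x0, xA. apply Rplus_lt_compat_l. unfold Rdiv. apply Rmult_lt_compat_r.
  apply Rinv_0_lt_compat; lra. lra. }
assert (HAB : xA < xB).
{ unfold xB, xA. apply Rplus_lt_compat_l. unfold Rdiv. apply Rmult_lt_compat_r.
  apply Rinv_0_lt_compat; lra. lra. }
set (h := fun x => exp (a*(x-x0)) * (V x - 1)).
set (hd := fun x => exp (a*(x-x0)) * ((sin (k*(x-y)) - a*eps)/eps)).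
assert (Hh : forall x, derivable_pt_lim h x (hd x)).
{ intro x. destruct (HV x) as [d [Hd Hde]].
  assert (Hdd : d = (- a*eps*V x + sin (k*(x-y)))/eps) by (rewrite <- Hde; field; lra).
  apply is_derive_Reals. apply is_derive_Reals in Hd.
  evar (l : R).
  assert (H : is_derive h x l).
  { unfold h. auto_derive. exists d; exact Hd. subst l. reflexivity. }
  replace (hd x) with l. exact H.
  subst l. replace (Derive (fun x1 => V x1) x) with d by (symmetry; now apply is_derive_unique).
  unfold hd. rewrite Hdd. unfold Rminus. field. lra. }
assert (Hh0 : h x0 = 0) by (unfold h; rewrite HV0; ring).
assert (Hcont : continuity h).
{ intro x. apply derivable_continuous_pt. exists (hd x). apply Hh. }
assert (Hpos : forall x, x0 < x <= xA -> 0 < h x).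
{ intros x Hx. destruct (MVT_cor2 h hd x0 x) as [c [Hc1 Hc2]]; [lra| intros; apply Hh |].
  assert (0 < hd c).
  { unfold hd. apply Rmult_lt_0_compat. apply exp_pos.
    apply Rdiv_lt_0_compat; [|lra].
    assert (sin th < sin (k*(c-y))); [|lra].
    apply S1; [lra|]. split.
    - apply mul_gt; [lra|]. unfold x0 in Hc2. lra.
    - apply mul_lt; [lra|]. unfold xA in Hx. lra. }
  assert (0 < hd c * (x - x0)) by (apply Rmult_lt_0_compat; lra). lra. }
assert (Hdec : forall x1 x2, xA <= x1 < x2 -> x2 <= xB -> h x2 < h x1).
{ intros x1 x2 H12 H2. destruct (MVT_cor2 h hd x1 x2) as [c [Hc1 Hc2]]; [lra| intros; apply Hh |].
  assert (hd c < 0).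
  { unfold hd. rewrite <- (Rmult_0_r (exp (a * (c - x0)))). apply Rmult_lt_compat_l. apply exp_pos.
    assert (sin (k*(c-y)) < sin th).
    { apply S2; [lra|]. split.
      - apply mul_gt; [lra|]. unfold xA in H12. lra.
      - apply mul_lt; [lra|]. unfold xB in H2. lra. }
    unfold Rdiv. rewrite <- (Rmult_0_l (/eps)). apply Rmult_lt_compat_r.
    apply Rinv_0_lt_compat; lra. lra. }
  assert (hd c * (x2 - x1) < 0).
  { rewrite <- (Rmult_0_l (x2 - x1)). apply Rmult_lt_compat_r; lra. }
  lra. }
set (F := fun x => exp (a*(x-x0)) * ((a * sin (k*(x-y)) - k * cos (k*(x-y)))/(eps*(a*a+k*k)) - 1)).
assert (HF : forall x, derivable_pt_lim F x (hd x)).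
{ intro x. apply is_derive_Reals.
  evar (l : R).
  assert (H : is_derive F x l).
  { unfold F. auto_derive. exact I. subst l. reflexivity. }
  replace (hd x) with l. exact H.
  subst l. unfold hd. unfold Rminus. field. split; [lra|].
  assert (0 < a*a + k*k) by nra. lra. }
assert (HB : h xB < 0).
{ destruct (MVT_cor2 (fun x => h x - F x) (fun _ => 0) x0 xB) as [c [Hc1 Hc2]]; [lra| |].
  { intros c _. replace 0 with (hd c - hd c) by ring. apply derivable_pt_lim_minus; auto. }
  assert (E0 : k*(x0 - y) = th) by (unfold x0; field; lra).
  assert (EB : k*(xB - y) = th + 2 * INR 1 * PI) by (unfold xB; simpl; field; lra).
  assert (hxB : h xB = F xB - F x0) by lra.
  rewrite hxB. unfold F. rewrite E0, EB, sin_period, cos_period.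
  replace (x0 - x0) with 0 by ring. rewrite Rmult_0_r, exp_0.
  assert (1 < exp (a*(xB - x0))).
  { rewrite <- exp_0. apply exp_increasing. apply Rmult_lt_0_compat; lra. }
  rewrite Hsin.
  assert (0 < a*a + k*k) by nra.
  replace ((a * (a * eps) - k * cos th) / (eps * (a * a + k * k)) - 1)
    with (- ((k * cos th + eps*k*k) / (eps * (a * a + k * k)))) by (field; lra).
  assert (0 < (k * cos th + eps*k*k) / (eps * (a * a + k * k))).
  { apply Rdiv_lt_0_compat. assert (0 < k*cos th) by (apply Rmult_lt_0_compat; lra).
    assert (0 < eps*k*k) by (repeat apply Rmult_lt_0_compat; lra). lra.
    apply Rmult_lt_0_compat; lra. }
  nra. }
assert (HhA : 0 < h xA) by (apply Hpos; lra).
destruct (IVT (fun x => - h x) xA xB) as [z [Hz1 Hz2]].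
{ apply continuity_opp. exact Hcont. }
{ exact HAB. } { lra. } { lra. }
assert (Hhz : h z = 0) by lra.
assert (z <> xA) by (intro e; rewrite e in Hhz; lra).
assert (z <> xB) by (intro e; rewrite e in Hhz; lra).
assert (Hneq : forall x, h x <> 0 -> V x <> 1).
{ intros x Hx e. apply Hx. unfold h. rewrite e. ring. }
exists z. split; [|fold xA xB; lra].
split; [lra|]. split.
- unfold h in Hhz. apply Rmult_integral in Hhz. destruct Hhz as [e|e].
  + pose proof (exp_pos (a*(z-x0))). lra.
  + lra.
- intros x Hx. apply Hneq. destruct (Rle_dec x xA).
  + assert (0 < h x) by (apply Hpos; lra). lra.
  + assert (h z < h x) by (apply Hdec; lra). lra.
Qed.

Lemma pw_even n : (-1) ^ (2*n) = 1.
Proof. apply pow_1_even. Qed.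
Lemma pw_odd n : (-1) ^ (S (2*n)) = -1.
Proof. apply pow_1_odd. Qed.

Theorem lemma8 :
  exists delta : R, 0 < delta /\ delta <= 1 /\
  forall a eps : R, 0 < a -> 0 < eps -> a * eps < delta ->
  forall n : nat,
    (forall v : R -> R, is_sol a eps omega_p v ->
       v (xe_p a eps (2 * n + 1)) = 1 ->
       exists x1, next_hit v (xe_p a eps (2 * n + 1)) 1 x1 /\
         xe_p a eps (2 * n + 2) < x1 < xe_p a eps (2 * n + 3)) /\
    (forall v : R -> R, is_sol a eps omega_m v ->
       v (xe_m a eps (2 * n)) = -1 ->
       exists x1, next_hit v (xe_m a eps (2 * n)) (-1) x1 /\
         xe_m a eps (2 * n + 1) < x1 < xe_m a eps (2 * n + 2)).
Proof.
exists 1. split; [lra|]. split; [lra|].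
intros a eps Ha He Hae n. pose proof PI_RGT_0 as HPI.
split.
- intros v Hv Hv0.
  set (k := PI * omega_p). set (y := (4 * INR n + 2)/3).
  assert (Hk : 0 < k) by (unfold k, omega_p; lra).
  assert (E1 : xe_p a eps (2*n+1) = y + asin (a*eps)/k).
  { unfold xe_p, xn_p, y, k, omega_p.
    replace (2*n+1+1)%nat with (2*(n+1))%nat by lia. rewrite pw_even.
    rewrite plus_INR, mult_INR. simpl. field. lra. }
  assert (E2 : xe_p a eps (2*n+2) = y + (PI - asin (a*eps))/k).
  { unfold xe_p, xn_p, y, k, omega_p.
    replace (2*n+2+1)%nat with (S (2*(n+1)))%nat by lia. rewrite pw_odd.
    rewrite plus_INR, mult_INR. simpl. field. lra. }
  assert (E3 : xe_p a eps (2*n+3) = y + (2*PI + asin (a*eps))/k).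
  { unfold xe_p, xn_p, y, k, omega_p.
    replace (2*n+3+1)%nat with (2*(n+2))%nat by lia. rewrite pw_even.
    rewrite plus_INR, mult_INR. simpl. field. lra. }
  rewrite E1, E2, E3. rewrite E1 in Hv0.
  apply gen; [lra|lra|lra|lra| |exact Hv0].
  intro x. destruct (Hv x) as [d [Hd Hde]]. exists d. split; [exact Hd|].
  rewrite Hde.
  assert (sin (PI * omega_p * x) = - sin (k*(x-y))); [|lra].
  set (u := k*(x-y)).
  replace (PI * omega_p * x) with ((u + PI) + 2 * INR n * PI).
  + rewrite sin_period, neg_sin. ring.
  + unfold u, k, y, omega_p. field.
- intros v Hv Hv0.
  set (k := PI * omega_m). set (y := 4 * INR n).
  assert (Hk : 0 < k) by (unfold k, omega_m; lra).
  assert (E1 : xe_m a eps (2*n) = y + asin (a*eps)/k).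
  { unfold xe_m, xn_m, y, k, omega_m.
    replace (2*n+1)%nat with (S (2*n))%nat by lia. rewrite pw_odd.
    rewrite mult_INR. simpl. field. lra. }
  assert (E2 : xe_m a eps (2*n+1) = y + (PI - asin (a*eps))/k).
  { unfold xe_m, xn_m, y, k, omega_m.
    replace (2*n+1+1)%nat with (2*(n+1))%nat by lia. rewrite pw_even.
    rewrite plus_INR, mult_INR. simpl. field. lra. }
  assert (E3 : xe_m a eps (2*n+2) = y + (2*PI + asin (a*eps))/k).
  { unfold xe_m, xn_m, y, k, omega_m.
    replace (2*n+2+1)%nat with (S (2*(n+1)))%nat by lia. rewrite pw_odd.
    rewrite plus_INR, mult_INR. simpl. field. lra. }
  rewrite E1, E2, E3. rewrite E1 in Hv0.
  destruct (gen a eps k y (fun x => - v x)) as [x1 [[H1 [H2 H3]] H4]]; auto.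
  + intro x. destruct (Hv x) as [d [Hd Hde]]. exists (- d). split.
    * apply is_derive_Reals. apply is_derive_Reals in Hd.
      apply (is_derive_opp v x d). exact Hd.
    * assert (sin (PI * omega_m * x) = sin (k*(x-y))); [|nra].
      set (u := k*(x-y)).
      replace (PI * omega_m * x) with (u + 2 * INR n * PI).
      -- rewrite sin_period. ring.
      -- unfold u, k, y, omega_m. field.
  + rewrite Hv0. ring.
  + exists x1. split; [|exact H4]. split; [exact H1|]. split; [lra|].
    intros x Hx e. apply (H3 x Hx). rewrite e. ring.
Qed.
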